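(* Let $w_1,\dots,w_k\in\mathbb{R}^n$ be unit vectors, $f(x)=\bigwedge_{i=1}^k\mathrm{sign}(w_i\cdot x)$, and $\rho>0$. Let $\mathbf{P},\mathbf{N}$ be finite subsets of the unit sphere $\mathbb{S}^{n-1}$ with $f(x)=1$ for all $x\in\mathbf{P}$, and let \[\mathcal{H}=\{w\in\mathbb{R}^{n+1}:\|w\|_2\le1,\ w\cdot(x,1)\ge0\ \forall x\in\mathbf{P},\ w\cdot(x,1)\le0\ \forall x\in\mathbf{N}\}.\] If $w_1\cdot x<-\rho$ for all $x\in\mathbf{N}$, then \[|\mathcal{H}|\ge\left(\frac{\rho}{3(1+\rho)}\right)^{n+1}|B_2^n|,\] where $|\cdot|$ denotes Lebesgue volume (in the respective dimension) and $B_2^n=\{w\in\mathbb{R}^n:\|w\|_2\le1\}$. Moreover, $\mathcal{H}$ contains a ball of radius $\frac{\rho}{6(1+\rho)}$.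
   Context: $f(x)=1$ iff $w_i\cdot x>0$ for all $i\in[k]$, and $f(x)=-1$ otherwise. *)

(* Defs.v *)
From HB Require Import structures.
From mathcomp Require Import all_boot all_order all_algebra.
From mathcomp Require Import all_classical all_reals.
From mathcomp Require Import ereal sequences esum.
Set Implicit Arguments. Unset Strict Implicit. Unset Printing Implicit Defensive.
Import Order.TTheory GRing.Theory Num.Theory.
Local Open Scope classical_set_scope.
Local Open Scope ring_scope.

Section Defs.
Variable R : realType.

Definition dotv (n : nat) (x y : 'I_n -> R) : R := \sum_(i < n) x i * y i.
Definition norm2 (n : nat) (x : 'I_n -> R) : R := Num.sqrt (dotv x x).

Definition sphere (n : nat) : set ('I_n -> R) := [set x | norm2 x = 1].
Definition unit_ball (n : nat) : set ('I_n -> R) := [set x | norm2 x <= 1].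

(* the vector (x,1) in R^{n+1} *)
Definition ext1 (n : nat) (x : 'I_n -> R) : 'I_n.+1 -> R :=
  fun i => if (insub (val i) : option 'I_n) is Some j then x j else 1.

Definition box (n : nat) (a b : 'I_n -> R) : set ('I_n -> R) :=
  [set x | forall i, a i <= x i <= b i].
Definition box_vol (n : nat) (a b : 'I_n -> R) : R := \prod_(i < n) (b i - a i).

Definition lebesgue_vol (n : nat) (A : set ('I_n -> R)) : \bar R :=
  ereal_inf [set s : \bar R | exists (a b : nat -> 'I_n -> R),
    [/\ (forall k i, a k i <= b k i),
        A `<=` \bigcup_k box (a k) (b k) &
        s = (\sum_(0 <= k <oo) (box_vol (a k) (b k))%:E)%E]].

Definition Hspace (n : nat) (P N : seq ('I_n -> R)) : set ('I_n.+1 -> R) :=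
  [set w | norm2 w <= 1 /\
           (forall x, x \in P -> 0 <= dotv w (ext1 x)) /\
           (forall x, x \in N -> dotv w (ext1 x) <= 0)].

End Defs.

(* Main.v *)
Require Import Defs.
From HB Require Import structures.
From mathcomp Require Import all_boot all_order all_algebra.
From mathcomp Require Import all_classical all_reals.
From mathcomp Require Import ereal sequences esum.
From mathcomp Require Import all_analysis.
Import Order.TTheory GRing.Theory Num.Theory.
Local Open Scope classical_set_scope.
Local Open Scope ring_scope.
From mathcomp Require Import measurable_realfun lebesgue_measure lebesgue_integral.
From mathcomp Require Import ring lra.
Set Implicit Arguments. Unset Strict Implicit. Unset Printing Implicit Defensive.

Section Geo.
Variable R : realType.
Implicit Types (n : nat).

Lemma dotvC n (x y : 'I_n -> R) : dotv x y = dotv y x.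
Proof. by apply: eq_bigr => i _; rewrite mulrC. Qed.

Lemma dotvDl n (x y z : 'I_n -> R) :
  dotv (fun i => x i + y i) z = dotv x z + dotv y z.
Proof. by rewrite /dotv -big_split; apply: eq_bigr => i _; rewrite mulrDl. Qed.

Lemma dotvZl n (c : R) (x z : 'I_n -> R) :
  dotv (fun i => c * x i) z = c * dotv x z.
Proof. by rewrite /dotv mulr_sumr; apply: eq_bigr => i _; rewrite mulrA. Qed.

Lemma dotvBl n (x y z : 'I_n -> R) :
  dotv (fun i => x i - y i) z = dotv x z - dotv y z.
Proof. by rewrite /dotv -sumrB; apply: eq_bigr => i _; rewrite mulrBl. Qed.

Lemma dotvBr n (x y z : 'I_n -> R) :
  dotv z (fun i => x i - y i) = dotv z x - dotv z y.
Proof. by rewrite dotvC dotvBl (dotvC x) (dotvC y). Qed.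

Lemma dotvZr n (c : R) (x z : 'I_n -> R) :
  dotv z (fun i => c * x i) = c * dotv z x.
Proof. by rewrite dotvC dotvZl dotvC. Qed.

Lemma dotvDr n (x y z : 'I_n -> R) :
  dotv z (fun i => x i + y i) = dotv z x + dotv z y.
Proof. by rewrite dotvC dotvDl (dotvC x) (dotvC y). Qed.

Lemma dotv_ge0 n (x : 'I_n -> R) : 0 <= dotv x x.
Proof. by apply: sumr_ge0 => i _; rewrite -expr2 sqr_ge0. Qed.

Lemma norm2_ge0 n (x : 'I_n -> R) : 0 <= norm2 x.
Proof. exact: sqrtr_ge0. Qed.

Lemma norm2_sqr n (x : 'I_n -> R) : norm2 x ^+ 2 = dotv x x.
Proof. by rewrite /norm2 sqr_sqrtr // dotv_ge0. Qed.

Lemma dotv_eq0 n (x : 'I_n -> R) : dotv x x = 0 -> forall i, x i = 0.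
Proof.
move=> /eqP; rewrite psumr_eq0; last by move=> i _; rewrite -expr2 sqr_ge0.
move=> /allP H i; have := H i (mem_index_enum i); rewrite implyTb mulf_eq0 orbb.
by move/eqP.
Qed.

Lemma CS2 n (x y : 'I_n -> R) : dotv x y ^+ 2 <= dotv x x * dotv y y.
Proof.
set A := dotv x x; set B := dotv y y; set C := dotv x y.
have hB := dotv_ge0 y.
have h : 0 <= dotv (fun i => B * x i - C * y i) (fun i => B * x i - C * y i).
  exact: dotv_ge0.
have e : dotv (fun i => B * x i - C * y i) (fun i => B * x i - C * y i)
   = B * (B * A - C ^+ 2).
  rewrite dotvBl !dotvZl !dotvBr !dotvZr.
  rewrite -/A -/B -/C (dotvC y x) -/C. ring.
rewrite e in h.
case: (ltrgtP 0 B) => hB'.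
- by rewrite -subr_ge0 mulrC; move: h; rewrite pmulr_rge0.
- by move: hB; rewrite leNgt hB'.
- have y0 := dotv_eq0 (esym hB').
  have -> : C = 0 by rewrite /C /dotv big1 // => i _; rewrite y0 mulr0.
  by rewrite expr0n /= mulr_ge0 // dotv_ge0.
Qed.

Lemma CS n (x y : 'I_n -> R) : `|dotv x y| <= norm2 x * norm2 y.
Proof.
rewrite /norm2 -sqrtrM ?dotv_ge0 // -sqrtr_sqr. exact/ler_wsqrtr/CS2.
Qed.

Lemma CS_le n (x y : 'I_n -> R) : dotv x y <= norm2 x * norm2 y.
Proof. exact: le_trans (ler_norm _) (CS x y). Qed.

Lemma CS_ge n (x y : 'I_n -> R) : - (norm2 x * norm2 y) <= dotv x y.
Proof.
rewrite lerNl; apply: le_trans (CS x y); rewrite -normrN; exact: ler_norm.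
Qed.

Definition hd n (v : 'I_n.+1 -> R) : 'I_n -> R :=
  fun i => v (widen_ord (leqnSn n) i).
Definition extd n (g : 'I_n -> R) (d : R) : 'I_n.+1 -> R :=
  fun i => if (insub (val i) : option 'I_n) is Some j then g j else d.

Lemma ext1E n (x : 'I_n -> R) : ext1 x = extd x 1.
Proof. by []. Qed.

Lemma extd_hd n (g : 'I_n -> R) d i : extd g d (widen_ord (leqnSn n) i) = g i.
Proof.
rewrite /extd; case: insubP => [j _ hj|]; last by rewrite /= ltn_ord.
by congr g; apply: val_inj; rewrite hj.
Qed.

Lemma hd_extd n (g : 'I_n -> R) d : hd (extd g d) = g.
Proof. by apply: funext => i; rewrite /hd extd_hd. Qed.

Lemma extd_max n (g : 'I_n -> R) d : extd g d ord_max = d.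
Proof. by rewrite /extd; case: insubP => [j|]; rewrite //= ltnn. Qed.

Lemma dotv_split n (v y : 'I_n.+1 -> R) :
  dotv v y = dotv (hd v) (hd y) + v ord_max * y ord_max.
Proof. by rewrite /dotv big_ord_recr. Qed.

End Geo.

Section Cyl.
Variable R : realType.
Variables (n : nat) (w0 : 'I_n -> R) (rho : R).
Hypothesis hw0 : norm2 w0 = 1.
Hypothesis rho0 : 0 < rho.

Let p : R := (1 + rho)^-1.
Let q : R := rho * p / 3.

Let p0 : 0 < p. Proof. by rewrite /p invr_gt0 addr_gt0. Qed.
Let pE : p * (1 + rho) = 1. Proof. by rewrite /p mulVf // gt_eqF // addr_gt0. Qed.
Let q0 : 0 < q. Proof. by rewrite /q; apply: divr_gt0 => //; apply: mulr_gt0. Qed.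

Definition Cyl : set ('I_n.+1 -> R) :=
  [set v | norm2 (fun i => hd v i - p * w0 i) <= q /\ q <= v ord_max <= 2 * q].

Lemma cyl_sub (P N : seq ('I_n -> R)) :
  (forall x, x \in P -> sphere x) ->
  (forall x, x \in N -> sphere x) ->
  (forall x, x \in P -> 0 < dotv w0 x) ->
  (forall x, x \in N -> dotv w0 x < - rho) ->
  Cyl `<=` Hspace P N.
Proof.
move=> hP hN hPw hNw v [hz /andP[h1 h2]].
have [z [{}hz hv]] : exists z, norm2 z <= q /\ hd v = fun i => p * w0 i + z i.
  exists (fun i => hd v i - p * w0 i); split => //.
  by apply: funext => i; ring.
have dx : forall x, dotv v (ext1 x) = p * dotv w0 x + dotv z x + v ord_max.
  move=> x; rewrite dotv_split ext1E hd_extd extd_max mulr1 hv dotvDl dotvZl //.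
have hz0 := norm2_ge0 z.
split; [|split].
- have ww : dotv w0 w0 = 1 by rewrite -norm2_sqr hw0 expr1n.
  have zz : dotv z z <= q ^+ 2 by rewrite -norm2_sqr lerXn2r // ?nnegrE ?norm2_ge0 ?ltW.
  have wz : dotv w0 z <= q by apply: le_trans (CS_le _ _) _; rewrite hw0 mul1r.
  have vv : dotv v v <= 1.
    rewrite dotv_split hv dotvDl !dotvDr !dotvZl !dotvZr ww (dotvC z w0).
    have hm : v ord_max * v ord_max <= 4 * q ^+ 2.
      have : 0 <= v ord_max by apply: le_trans h1; exact: ltW.
      move=> hv0; apply: le_trans (ler_pM hv0 hv0 h2 h2) _.
      by rewrite le_eqVlt; apply/orP; left; apply/eqP; ring.
    have e1 : p * (p * 1 + dotv w0 z) + p * dotv w0 z + dotv z z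
       <= p * p + 2 * p * q + q ^+ 2.
      have : p * dotv w0 z <= p * q by rewrite ler_wpM2l // ltW.
      lra.
    have e2 : p * p + 2 * p * q + q ^+ 2 + 4 * q ^+ 2 <= 1.
      have h3 : 0 <= p * p * rho * rho by rewrite mulr_ge0 // ?mulr_ge0 ?ltW.
      have h4 : 0 <= p * p * rho by rewrite mulr_ge0 // ?mulr_ge0 ?ltW.
      have e : (p * (1 + rho)) ^+ 2 -
        (p * p + 2 * p * q + q ^+ 2 + 4 * q ^+ 2)
        = (p * p * rho * rho) * (4 / 9) + (p * p * rho) * (4 / 3) by rewrite /q; field.
      rewrite pE expr1n in e.
      rewrite -subr_ge0 e; by rewrite addr_ge0 // mulr_ge0.
    lra.
  by rewrite /norm2 -sqrtr1 ler_wsqrtr.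
- move=> x hx; rewrite dx.
  have nx : norm2 x = 1 by apply: hP.
  have := CS_ge z x; rewrite nx mulr1 => hzx.
  have := hPw x hx => hw.
  have : 0 <= p * dotv w0 x by rewrite mulr_ge0 // ltW.
  lra.
- move=> x hx; rewrite dx.
  have nx : norm2 x = 1 by apply: hN.
  have := CS_le z x; rewrite nx mulr1 => hzx.
  have : p * dotv w0 x <= p * (- rho) by rewrite ler_wpM2l // ltW // hNw.
  have : 3 * q = rho * p by rewrite /q; field.
  lra.
Qed.

Definition cen : 'I_n.+1 -> R := extd (fun i => p * w0 i) (3 * q / 2).

Lemma ball_sub :
  [set v | norm2 (fun i => v i - cen i) <= q / 2] `<=` Cyl.
Proof.
move=> v /= hd0; set d := (fun i => v i - cen i) in hd0.
have e1 : hd d = fun i => hd v i - p * w0 i.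
  by apply: funext => i; rewrite /d /hd /cen extd_hd.
have e2 : d ord_max = v ord_max - 3 * q / 2 by rewrite /d /cen extd_max.
have sp := dotv_split d d.
have h1 : norm2 (hd d) <= norm2 d.
  rewrite /norm2 ler_wsqrtr // sp lerDl -expr2; exact: sqr_ge0.
have h2 : `|d ord_max| <= norm2 d.
  rewrite /norm2 -sqrtr_sqr ler_wsqrtr // sp expr2 lerDr; exact: dotv_ge0.
split.
  rewrite -e1; apply: (le_trans h1); apply: (le_trans hd0).
  by rewrite ler_pdivrMr // ler_pMr // ?ler1n.
have := le_trans h2 hd0; rewrite e2 ler_norml => /andP[a b].
apply/andP; split; lra.
Qed.

Lemma n_gt0 : (0 < n)%N.
Proof.
case: n w0 hw0 => // w; rewrite /norm2 /dotv big_ord0 sqrtr0 => /eqP.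
by rewrite eq_sym oner_eq0.
Qed.

Lemma norm2Z (c : R) (x : 'I_n -> R) : norm2 (fun i => c * x i) = `|c| * norm2 x.
Proof.
rewrite /norm2 dotvZl dotvZr mulrA -expr2 sqrtrM ?sqr_ge0 //.
by rewrite sqrtr_sqr.
Qed.

Lemma lebesgue_vol_ge0 m (A : set ('I_m -> R)) : (0 <= lebesgue_vol A)%E.
Proof.
apply: le_ereal_inf_tmp => _ [a [b [hab _ ->]]].
apply: nneseries_ge0 => k _ _; rewrite lee_fin /box_vol.
by apply: prodr_ge0 => i _; rewrite subr_ge0.
Qed.

Local Open Scope ereal_scope.

Lemma vol_cyl :
  (q ^+ n.+1)%:E * lebesgue_vol (@unit_ball R n) <= lebesgue_vol Cyl.
Proof.
have n0 := n_gt0.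
apply: le_ereal_inf_tmp => _ [a [b [hab hcov ->]]].
set LB := lebesgue_vol (@unit_ball R n).
pose V k := (\prod_(i < n) (b k (widen_ord (leqnSn n) i) - a k (widen_ord (leqnSn n) i)))%R.
pose lo k := a k ord_max.
pose hi k := b k ord_max.
have hbv k : box_vol (a k) (b k) = (V k * (hi k - lo k))%R by rewrite /box_vol big_ord_recr.
have V0 k : (0 <= V k)%R by apply: prodr_ge0 => i _; rewrite subr_ge0.
pose c : R := (q^-1 ^+ n)%R.
have c0 : (0 <= c)%R by rewrite exprn_ge0 // invr_ge0 ltW.
pose g k t := ((c * V k) * \1_(`[lo k, hi k]) t)%:E.
have g0 k t : 0 <= g k t.
  by rewrite lee_fin mulr_ge0 ?mulr_ge0 // indicE ler0n.
have step1 t : (q <= t <= 2 * q)%R -> LB <= \sum_(k <oo) g k t.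
  move=> ht; apply: ereal_inf_lbound.
  pose a' k := fun i => if (lo k <= t <= hi k)%R then ((a k (widen_ord (leqnSn n) i) - p * w0 i) / q)%R else 0%R.
  pose b' k := fun i => if (lo k <= t <= hi k)%R then ((b k (widen_ord (leqnSn n) i) - p * w0 i) / q)%R else 0%R.
  exists a', b'; split.
  - move=> k i; rewrite /a' /b'; case: ifP => // _.
    apply: ler_wpM2r; first by rewrite invr_ge0 ltW.
    by rewrite lerD2r; apply: hab.
  - move=> y hy.
    have hv : Cyl (extd (fun i => p * w0 i + q * y i)%R t).
      split; last by rewrite extd_max.
      rewrite hd_extd.
      have -> : (fun i => p * w0 i + q * y i - p * w0 i)%R = (fun i => q * y i)%R.
        by apply: funext => i; ring.
      rewrite norm2Z gtr0_norm //; rewrite -[X in (_ <= X)%R]mulr1.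
      by apply: ler_wpM2l; [exact: ltW | exact: hy].
    have [k _ hk] := hcov _ hv.
    have hkt : (lo k <= t <= hi k)%R by have := hk ord_max; rewrite extd_max.
    exists k => //; move=> i; rewrite /a' /b' hkt.
    have := hk (widen_ord (leqnSn n) i); rewrite extd_hd => /andP[h1 h2].
    by rewrite !ler_pdivrMr ?ler_pdivlMr //; apply/andP; split; lra.
  - apply: eq_eseriesr => k _; rewrite /g /box_vol /a' /b' indicE.
    case: (boolP (lo k <= t <= hi k)%R) => hk.
    + have -> : t \in [set` `[lo k, hi k]] by rewrite inE /= in_itv /= hk.
      rewrite mulr1; congr EFin.
      have hc : (q^-1 ^+ n = \prod_(i < n) q^-1)%R by rewrite prodr_const card_ord.
      rewrite /V /c mulrC hc -big_split /=.
      by apply: eq_bigr => i _; field; rewrite gt_eqF.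
    + have -> : t \in [set` `[lo k, hi k]] = false.
        apply/negbTE/negP; rewrite inE /= in_itv /= => h.
        by rewrite h in hk.
      by rewrite mulr0 subrr prodr_const card_ord expr0n /= gtn_eqF.
pose mu := @lebesgue_measure R.
pose D : set R := [set` Interval (BLeft q) (BRight (2 * q)%R)].
have mD : measurable D by exact: measurable_itv.
have muD : mu D = q%:E.
  have e2q : (2 * q - q = q)%R by ring.
  rewrite /mu /D lebesgue_measure_itv /= ifT; last by rewrite lte_fin -subr_gt0 e2q.
  by rewrite -EFinD e2q.
have LB0 : 0 <= LB by exact: lebesgue_vol_ge0.
have mg k : measurable_fun D (g k).
  apply/measurable_EFinP; apply: measurable_funM; first exact: measurable_cst.
  by apply: measurable_indic; exact: measurable_itv.
have I1 : q%:E * LB <= \int[mu]_(t in D) \sum_(k <oo) g k t.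
  rewrite muleC -muD -integral_cst //.
  apply: ge0_le_integral => //.
  - by apply: (ge0_emeasurable_sum (P := xpredT)) => [k t _ _|k _]; [exact: g0 | exact: mg].
have I2 : \int[mu]_(t in D) \sum_(k <oo) g k t <=
          \sum_(k <oo) ((c * V k) * (hi k - lo k))%:E.
  rewrite integral_nneseries //.
  apply: lee_nneseries => [k _ _|k _].
    by apply: integral_ge0 => t _; exact: g0.
  have hz := @integralZl_indic _ _ _ mu D mD (fun _ => [set` Interval (BLeft (lo k)) (BRight (hi k))]) (c * V k)%R.
  rewrite /= in hz.
  rewrite /g hz //; last first.
  - by move=> h; exfalso; move: h; rewrite ltNge mulr_ge0.
  rewrite integral_indic; last exact: measurable_itv.
  rewrite [X in _ <= X]EFinM; apply: lee_wpmul2l; first by rewrite lee_fin mulr_ge0.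
  apply: le_trans (measureIl _ _ _) _; [exact: measurable_itv | exact: mD |].
  change (lebesgue_measure [set` Interval (BLeft (lo k)) (BRight (hi k))] <= (hi k - lo k)%:E).
  rewrite lebesgue_measure_itv /=; case: ifP => _.
    by rewrite -EFinD.
  have : (lo k <= hi k)%R by apply: (hab k ord_max).
  by rewrite lee_fin subr_ge0.
  exact: mD.
have E3 : \sum_(k <oo) ((c * V k) * (hi k - lo k))%:E =
          c%:E * \sum_(0 <= k <oo) (box_vol (a k) (b k))%:E.
  rewrite -nneseriesZl; last first.
    by move=> j _; rewrite lee_fin hbv mulr_ge0 // subr_ge0; apply: (hab j ord_max).
  by apply: eq_eseriesr => j _; rewrite hbv -EFinM mulrA.
have I4 : q%:E * LB <= c%:E * \sum_(0 <= k <oo) (box_vol (a k) (b k))%:E.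
  by rewrite -E3; exact: le_trans I1 I2.
rewrite exprSr EFinM -muleA.
apply: le_trans (lee_wpmul2l _ I4) _; first by rewrite lee_fin exprn_ge0 // ltW.
rewrite muleA -EFinM (_ : q ^+ n * c = 1)%R ?mul1e //.
by rewrite /c -exprMn mulfV ?gt_eqF // expr1n.
Qed.

End Cyl.

Lemma lebesgue_vol_mono (R : realType) m (A B : set ('I_m -> R)) :
  A `<=` B -> (lebesgue_vol A <= lebesgue_vol B)%E.
Proof.
move=> AB; apply: ereal_inf_le_tmp => _ [a [b [hab hcov ->]]].
by exists a, b; split => //; exact: subset_trans hcov.
Qed.

Unset Implicit Arguments.

Theorem lemma3p3 (R : realType) (n k : nat) (w : 'I_k.+1 -> 'I_n -> R)
    (rho : R) (P N : seq ('I_n -> R)) :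
  (forall i, norm2 (w i) = 1) ->
  0 < rho ->
  (forall x, x \in P -> sphere x) ->
  (forall x, x \in N -> sphere x) ->
  (forall x, x \in P -> forall i, 0 < dotv (w i) x) ->
  (forall x, x \in N -> dotv (w ord0) x < - rho) ->
  (((rho / (3 * (1 + rho))) ^+ n.+1)%:E * lebesgue_vol (@unit_ball R n)
      <= lebesgue_vol (Hspace P N))%E /\
  exists c : 'I_n.+1 -> R,
    [set v | norm2 (fun i => v i - c i) <= rho / (6 * (1 + rho))]
      `<=` Hspace P N.
Proof.
move=> hw rho0 hP hN hPw hNw.
have hw0 := hw ord0.
have r1 : 1 + rho != 0 by rewrite gt_eqF // addr_gt0.
have e1 : rho / (3 * (1 + rho)) = rho * (1 + rho)^-1 / 3 by field.
have e2 : rho / (6 * (1 + rho)) = rho * (1 + rho)^-1 / 3 / 2 by field.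
have hsub := cyl_sub hw0 rho0 hP hN (fun x hx => hPw x hx ord0) hNw.
split.
  rewrite e1; apply: le_trans (vol_cyl hw0 rho0) _.
  exact: lebesgue_vol_mono hsub.
exists (cen (w ord0) rho) => v hv; apply: hsub; apply: ball_sub.
  by []. by move: hv; rewrite /= e2.
Qed.
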